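(* For every linear operator $T$ in $H$, the essential numerical range $W_e(T)$ is closed and convex, and $\operatorname{conv}\sigma_e(T)\subset W_e(T)$.
   Context: $H$ is a separable infinite-dimensional complex Hilbert space; operators need not be closed, closable or densely defined. $W_e(T)=\{\lambda\in\mathbb C:\exists x_n\in\operatorname{dom}(T),\|x_n\|=1,x_n\stackrel{w}{\to}0,\langle Tx_n,x_n\rangle\to\lambda\}$ and $\sigma_e(T)=\{\lambda:\exists x_n\in\operatorname{dom}(T),\|x_n\|=1,x_n\stackrel{w}{\to}0,\|(T-\lambda)x_n\|\to0\}$. *)

(* Defs.v *)
From HB Require Import structures.
From mathcomp Require Import all_boot all_order all_algebra.
From mathcomp Require Import complex.
From mathcomp Require Import reals.
Set Implicit Arguments. Unset Strict Implicit. Unset Printing Implicit Defensive.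
Import Order.TTheory GRing.Theory Num.Theory.
Local Open Scope ring_scope.
Local Open Scope complex_scope.

Definition cvgC (R : realType) (u : nat -> R[i]) (l : R[i]) : Prop :=
  forall e : R, 0 < e -> exists N : nat, forall n : nat, (N <= n)%N ->
    `|u n - l| < e%:C.

Record inner_product_space (R : realType) (V : lmodType R[i]) := IPS {
  ip : V -> V -> R[i];
  ip_linl : forall (a : R[i]) (x y z : V), ip (a *: x + y) z = a * ip x z + ip y z;
  ip_conj : forall x y : V, ip x y = (ip y x)^*;
  ip_ge0 : forall x : V, 0 <= ip x x;
  ip_eq0 : forall x : V, ip x x = 0 -> x = 0
}.

Definition is_hilbert_space (R : realType) (V : lmodType R[i])
    (S : inner_product_space V) : Prop :=
  (forall x : nat -> V,
     (forall e : R, 0 < e -> exists N : nat, forall m n : nat, (N <= m)%N -> (N <= n)%N ->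
        ip S (x m - x n) (x m - x n) < e%:C) ->
     exists l : V, cvgC (fun n => ip S (x n - l) (x n - l)) 0)
  /\ (exists d : nat -> V, forall (x : V) (e : R), 0 < e ->
        exists n : nat, ip S (x - d n) (x - d n) < e%:C)
  /\ (exists f : nat -> V, forall (n : nat) (c : nat -> R[i]),
        \sum_(i < n) c i *: f i = 0 -> forall i : nat, (i < n)%N -> c i = 0).

(* A linear operator T with domain dom (a linear subspace, not necessarily
   closed or dense); values of T off dom are irrelevant. *)
Definition linear_operator (R : realType) (V : lmodType R[i])
    (dom : V -> Prop) (T : V -> V) : Prop :=
  dom 0 /\
  (forall (a : R[i]) (x y : V), dom x -> dom y -> dom (a *: x + y)) /\
  (forall (a : R[i]) (x y : V), dom x -> dom y -> T (a *: x + y) = a *: T x + T y).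

Definition weak_to0 (R : realType) (V : lmodType R[i]) (S : inner_product_space V)
    (x : nat -> V) : Prop :=
  forall y : V, cvgC (fun n => ip S (x n) y) 0.

Definition W_e (R : realType) (V : lmodType R[i]) (S : inner_product_space V)
    (dom : V -> Prop) (T : V -> V) (lam : R[i]) : Prop :=
  exists x : nat -> V, (forall n, dom (x n)) /\ (forall n, ip S (x n) (x n) = 1) /\
    weak_to0 S x /\ cvgC (fun n => ip S (T (x n)) (x n)) lam.

(* Essential spectrum (in the sense of the paper): ||(T - lam) x_n|| -> 0 *)
Definition sigma_e (R : realType) (V : lmodType R[i]) (S : inner_product_space V)
    (dom : V -> Prop) (T : V -> V) (lam : R[i]) : Prop :=
  exists x : nat -> V, (forall n, dom (x n)) /\ (forall n, ip S (x n) (x n) = 1) /\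
    weak_to0 S x /\
    cvgC (fun n => ip S (T (x n) - lam *: x n) (T (x n) - lam *: x n)) 0.

Definition closedC (R : realType) (A : R[i] -> Prop) : Prop :=
  forall z : R[i], (forall e : R, 0 < e -> exists w, A w /\ `|z - w| < e%:C) -> A z.

Definition convexC (R : realType) (A : R[i] -> Prop) : Prop :=
  forall (z w : R[i]) (t : R), A z -> A w -> 0 <= t -> t <= 1 ->
    A (t%:C * z + (1 - t)%:C * w).

Definition convC (R : realType) (A : R[i] -> Prop) (z : R[i]) : Prop :=
  exists (n : nat) (t : 'I_n -> R) (p : 'I_n -> R[i]),
    (forall i, 0 <= t i) /\ \sum_(i < n) t i = 1 /\ (forall i, A (p i)) /\
    z = \sum_(i < n) (t i)%:C * p i.

(* Main.v *)
Require Import Defs.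
From mathcomp Require Import all_boot all_order all_algebra complex reals.
From mathcomp Require Import ring lra.
From Stdlib Require Import ClassicalEpsilon.
Import Order.TTheory GRing.Theory Num.Theory.
Local Open Scope ring_scope.
Local Open Scope complex_scope.
Section IP.
Variable R : realType.
Variable V : lmodType R[i].
Variable S : inner_product_space V.
Local Notation ip := (ip S).
Lemma cjD (x y : R[i]) : conjc (x + y) = conjc x + conjc y. Proof. exact: rmorphD. Qed.
Lemma cjM (x y : R[i]) : conjc (x * y) = conjc x * conjc y. Proof. exact: rmorphM. Qed.
Lemma cjN (x : R[i]) : conjc (- x) = - conjc x. Proof. exact: rmorphN. Qed.
Lemma cjB (x y : R[i]) : conjc (x - y) = conjc x - conjc y. Proof. exact: rmorphB. Qed.
Lemma cjR (r : R) : conjc (r%:C) = r%:C. Proof. exact: conjc_real. Qed.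


Lemma ip0l (z : V) : ip 0 z = 0.
Proof.
have := ip_linl S 1 0 0 z; rewrite scaler0 addr0 mul1r => h.
by have := congr1 (fun w => w - ip 0 z) h; rewrite addrK subrr => <-.
Qed.
Lemma ipDl (x y z : V) : ip (x + y) z = ip x z + ip y z.
Proof. by have := ip_linl S 1 x y z; rewrite scale1r mul1r. Qed.
Lemma ipZl a (x z : V) : ip (a *: x) z = a * ip x z.
Proof. by have := ip_linl S a x 0 z; rewrite addr0 ip0l addr0. Qed.
Lemma ipNl (x z : V) : ip (- x) z = - ip x z.
Proof. by rewrite -scaleN1r ipZl mulN1r. Qed.
Lemma ipBl (x y z : V) : ip (x - y) z = ip x z - ip y z.
Proof. by rewrite ipDl ipNl. Qed.
Lemma ip0r (z : V) : ip z 0 = 0.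
Proof. by rewrite ip_conj ip0l conjc0. Qed.
Lemma ipDr (x y z : V) : ip z (x + y) = ip z x + ip z y.
Proof. by rewrite ip_conj ipDl cjD -!ip_conj. Qed.
Lemma ipZr a (x z : V) : ip z (a *: x) = conjc a * ip z x.
Proof. by rewrite ip_conj ipZl cjM -!ip_conj. Qed.
Lemma ipNr (x z : V) : ip z (- x) = - ip z x.
Proof. by rewrite ip_conj ipNl cjN -!ip_conj. Qed.
Lemma ipBr (x y z : V) : ip z (x - y) = ip z x - ip z y.
Proof. by rewrite ipDr ipNr. Qed.
Lemma ip_exp2 (al ga : R[i]) (x y x' y' : V) :
  ip (al *: x + ga *: y) (al *: x' + ga *: y') =
  al * conjc al * ip x x' + al * conjc ga * ip x y' + ga * conjc al * ip y x' + ga * conjc ga * ip y y'.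
Proof. rewrite ipDl !ipDr !ipZl !ipZr; ring. Qed.
Lemma ip_realJ (x : V) : conjc (ip x x) = ip x x.
Proof. by rewrite -ip_conj. Qed.

Lemma CS (x y : V) : `|ip x y| ^+ 2 <= ip x x * ip y y.
Proof.
have [y0|yn0] := eqVneq (ip y y) 0.
  by rewrite (ip_eq0 y0) !ip0r normr0 expr0n /= mulr0.
set c := ip x y; set B := ip y y.
have Bgt0 : 0 < B by rewrite lt_def yn0 ip_ge0.
have := ip_ge0 S (x - (c / B) *: y).
rewrite ipBl !ipBr !ipZl !ipZr cjM conjc_inv ip_realJ -/B -/c.
have -> : ip y x = c^* by rewrite ip_conj.
have -> : ip x x - c^* / B * c - (c / B * (c^* ) - c / B * (c^* / B * B))
   = ip x x - c * c^* / B by field.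
rewrite sqr_normc subr_ge0 ler_pdivrMr //.
Qed.
End IP.
Lemma sqr_eq_nonneg (R : realType) (x y : R) : 0 <= x -> 0 <= y -> x ^+ 2 = y ^+ 2 -> x = y.
Proof.
move=> hx hy h; apply/eqP; rewrite -(eqrXn2 (n:=2)) //; exact/eqP.
Qed.

Lemma ab_exists (R : realType) (rho t : R) : 0 <= rho -> 0 <= t -> t <= 1 ->
  exists a b : R, [/\ 0 <= a, 0 <= b, a ^+ 2 + b ^+ 2 = 1 & a ^+ 2 - rho * a * b = t].
Proof.
move=> hr ht0 ht1.
set k := 2 * t - 1; set q := 1 + rho ^+ 2; set D := q - k ^+ 2.
have qgt0 : 0 < q by rewrite /q; nra.
have Dge0 : 0 <= D by rewrite /D /q /k; nra.
set sD := Num.sqrt D.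
have sD2 : sD ^+ 2 = D by rewrite sqr_sqrtr.
have sDge0 : 0 <= sD by apply: sqrtr_ge0.
set c := (k + rho * sD) / q; set s := (sD - rho * k) / q.
have cs1 : c ^+ 2 + s ^+ 2 = 1.
  have e1 : (k + rho * sD) ^+ 2 + (sD - rho * k) ^+ 2 = q ^+ 2.
    have -> : (k + rho * sD) ^+ 2 + (sD - rho * k) ^+ 2 = (k ^+ 2 + sD ^+ 2) * (1 + rho ^+ 2) by ring.
    rewrite sD2 /D /q; ring.
  by rewrite /c /s !expr_div_n -mulrDl e1 divff // expf_eq0 gt_eqF.
have sDk : rho * k <= sD.
  have hk : k ^+ 2 <= 1 by rewrite /k; nra.
  have hh : 0 <= (1 + rho ^+ 2) * (1 - k ^+ 2) by rewrite mulr_ge0 // ?subr_ge0 //; nra.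
  have h1 : (rho * k) ^+ 2 <= sD ^+ 2 by rewrite sD2 /D /q; nra.
  have [hn|hp] := lerP (rho * k) 0; first exact: le_trans hn sDge0.
  by rewrite -(ler_pXn2r (n := 2)) // ?nnegrE ?ltW.
have sge0 : 0 <= s by rewrite /s divr_ge0 ?subr_ge0 // ltW.
have c1 : c <= 1 by nra.
have c2 : -1 <= c by nra.
exists (Num.sqrt ((1 + c) / 2)), (Num.sqrt ((1 - c) / 2)).
have ha : Num.sqrt ((1 + c) / 2) ^+ 2 = (1 + c) / 2 by rewrite sqr_sqrtr //; lra.
have hb : Num.sqrt ((1 - c) / 2) ^+ 2 = (1 - c) / 2 by rewrite sqr_sqrtr //; lra.
have hab : Num.sqrt ((1 + c) / 2) * Num.sqrt ((1 - c) / 2) = s / 2.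
  apply: sqr_eq_nonneg; first by rewrite mulr_ge0 ?sqrtr_ge0.
    by rewrite divr_ge0.
  rewrite exprMn ha hb expr_div_n.
  have -> : s ^+ 2 = 1 - c ^+ 2 by rewrite -cs1; ring.
  by field.
constructor; [exact: sqrtr_ge0 | exact: sqrtr_ge0 | rewrite ha hb; by field |].
rewrite -mulrA hab ha /s /c /k /q.
by field; rewrite gt_eqF.
Qed.

Definition ev (Q : nat -> Prop) := exists M, forall n, (M <= n)%N -> Q n.
Lemma ev_and (Q1 Q2 : nat -> Prop) : ev Q1 -> ev Q2 -> ev (fun n => Q1 n /\ Q2 n).
Proof.
move=> [M1 h1] [M2 h2]; exists (maxn M1 M2) => n; rewrite geq_max => /andP[a b].
by split; [exact: h1|exact: h2].
Qed.
Lemma ev_all (Q : nat -> nat -> Prop) N : (forall j, (j < N)%N -> ev (Q j)) ->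
  ev (fun n => forall j, (j < N)%N -> Q j n).
Proof.
elim: N => [|N IH] h; first by exists 0%N.
have [M1 h1] := IH (fun j hj => h j (leqW hj)).
have [M2 h2] := h N (ltnSn N).
exists (maxn M1 M2) => n; rewrite geq_max => /andP[a b] j.
by rewrite ltnS leq_eqVlt => /orP[/eqP->|hj]; [exact: h2 | exact: h1].
Qed.
Lemma ev_ex (Q : nat -> Prop) : ev Q -> exists n, Q n.
Proof. by move=> [M h]; exists M; apply: h. Qed.
Lemma ev_mono (Q1 Q2 : nat -> Prop) : (forall n, Q1 n -> Q2 n) -> ev Q1 -> ev Q2.
Proof. by move=> h [M hM]; exists M => n hn; apply/h/hM. Qed.

Lemma archi_inv (R : realType) (e : R) : 0 < e -> exists K : nat, forall k, (K <= k)%N -> (k.+1%:R)^-1 < e.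
Proof.
move=> he; exists (Num.Def.archi_bound e^-1) => k hk.
have h : e^-1 < (Num.Def.archi_bound e^-1)%:R by apply: archi_boundP; rewrite invr_ge0 ltW.
rewrite invf_plt ?posrE ?ltr0n //.
by apply: lt_le_trans h _; rewrite ler_nat; exact: leqW.
Qed.

Lemma normC_real {R : realType} (x : R) : `|x%:C| = `|x|%:C.
Proof. by rewrite normc_def /= expr0n /= addr0 sqrtr_sqr. Qed.

Section Op.
Variable R : realType.
Variable V : lmodType R[i].
Variable S : inner_product_space V.
Variable dom : V -> Prop.
Variable T : V -> V.
Hypothesis HT : linear_operator dom T.
Variable d : nat -> V.
Hypothesis hd : forall (x : V) (e : R), 0 < e -> exists n, ip S (x - d n) (x - d n) < e%:C.
Local Notation ip := (ip S).

Definition P (z : R[i]) := forall e : R, 0 < e -> forall N : nat, exists x, dom x /\ ip x x = 1 /\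
   (forall j, (j < N)%N -> `|ip x (d j)| < e%:C) /\ `|ip (T x) x - z| < e%:C.

Lemma We_P z : W_e S dom T z -> P z.
Proof.
move=> [x [hx [h1 [hw hc]]]] e he N.
have : ev (fun n => (forall j, (j < N)%N -> `|ip (x n) (d j)| < e%:C) /\
                    `|ip (T (x n)) (x n) - z| < e%:C).
  apply: ev_and; last exact: hc e he.
  by apply: ev_all => j _; apply: ev_mono (hw (d j) e he) => n /=; rewrite subr0.
by move=> /ev_ex [n [h2 h3]]; exists (x n).
Qed.

Lemma sqr_lt (q : R[i]) (e : R) : 0 < e -> `|q| ^+ 2 < (e ^+ 2)%:C -> `|q| < e%:C.
Proof.
move=> he h; rewrite -(ltr_pXn2r (n:=2)) // ?nnegrE ?normr_ge0 ?lecR ?ltW //.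
suff -> : e%:C ^+ 2 = (e ^+ 2)%:C by [].
by rewrite rmorphXn.
Qed.

Lemma P_We z : P z -> W_e S dom T z.
Proof.
move=> hP.
have pos k : 0 < (k.+1%:R : R)^-1 by rewrite invr_gt0 ltr0n.
have [f hf] : exists f : nat -> V, forall k, dom (f k) /\ ip (f k) (f k) = 1 /\
   (forall j, (j < k)%N -> `|ip (f k) (d j)| < ((k.+1%:R)^-1)%:C) /\
   `|ip (T (f k)) (f k) - z| < ((k.+1%:R)^-1)%:C.
  exists (fun k => proj1_sig (constructive_indefinite_description _ (hP _ (pos k) k))).
  move=> k; exact: (proj2_sig (constructive_indefinite_description _ (hP _ (pos k) k))).
exists f; split; first by move=> k; case: (hf k).
split; first by move=> k; case: (hf k) => _ [].
split.
  move=> y e he.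
  have he2 : 0 < e / 2 by rewrite divr_gt0.
  have [j hj] := hd y ((e / 2) ^+ 2) (exprn_gt0 2 he2).
  have [K hK] := @archi_inv _ (e / 2) he2.
  exists (maxn K j.+1) => k; rewrite geq_max => /andP[hk1 hk2].
  case: (hf k) => _ [h1 [h2 _]].
  rewrite subr0.
  have -> : y = d j + (y - d j) by rewrite addrC subrK.
  rewrite ipDr.
  have e1 : `|ip (f k) (d j)| < (e / 2)%:C.
    by apply: lt_trans (h2 j hk2) _; rewrite ltcR; exact: hK k hk1.
  have e2 : `|ip (f k) (y - d j)| < (e / 2)%:C.
    apply: sqr_lt => //; apply: le_lt_trans (@CS _ _ S _ _) _; by rewrite h1 mul1r.
  apply: le_lt_trans (ler_normD _ _) _.
  by rewrite (splitr e) rmorphD; apply: ltrD.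
move=> e he; have [K hK] := @archi_inv _ e he; exists K => k hk.
case: (hf k) => _ [_ [_ h3]]; apply: lt_trans h3 _; rewrite ltcR; exact: hK.
Qed.

Lemma We_closed : closedC (W_e S dom T).
Proof.
move=> z hz; apply: P_We => e he N.
have he2 : 0 < e / 2 by rewrite divr_gt0.
have [w [hw hzw]] := hz _ he2.
have [x [h1 [h2 [h3 h4]]]] := We_P w hw (e / 2) he2 N.
exists x; split => //; split => //; split.
  move=> j hj; apply: lt_trans (h3 j hj) _; rewrite ltcR; lra.
have -> : ip (T x) x - z = (ip (T x) x - w) + (w - z) by rewrite addrA subrK.
apply: le_lt_trans (ler_normD _ _) _.
by rewrite (splitr e) rmorphD; apply: ltrD => //; rewrite distrC.
Qed.

Lemma sigma_We z : sigma_e S dom T z -> W_e S dom T z.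
Proof.
move=> [x [hx [h1 [hw hc]]]]; exists x; split => //; split => //; split => // e he.
have [M hM] := hc (e ^+ 2) (exprn_gt0 2 he : 0 < e ^+ 2).
exists M => n hn; have := hM n hn => /=; rewrite subr0 => hr.
set r := T (x n) - z *: x n in hr.
have -> : ip (T (x n)) (x n) - z = ip r (x n) by rewrite /r ipBl ipZl h1 mulr1.
rewrite ger0_norm in hr; last by apply: ip_ge0.
apply: sqr_lt => //; apply: le_lt_trans (@CS _ _ S _ _) _; by rewrite h1 mulr1.
Qed.

Local Notation nm := (@Normc.normc R).

Lemma nm_ge0 (q : R[i]) : 0 <= nm q.
Proof. by case: q => a b; exact: sqrtr_ge0. Qed.
Lemma nmD (p q : R[i]) : nm (p + q) <= nm p + nm q.
Proof. exact: le_normcD. Qed.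
Lemma nmM (p q : R[i]) : nm (p * q) = nm p * nm q.
Proof. exact: Normc.normcM. Qed.
Lemma nmJ (q : R[i]) : nm (conjc q) = nm q.
Proof. by have := normcJ q => -[]. Qed.
Lemma nmR (r : R) : nm (r%:C) = `|r|.
Proof. by have := normC_real (R := R) r => -[]. Qed.
Lemma nmN (q : R[i]) : nm (- q) = nm q.
Proof. exact: normcN. Qed.
Lemma ltC (q : R[i]) (e : R) : (`|q| < e%:C) = (nm q < e).
Proof. exact: ltcR. Qed.

Lemma dom0 : dom 0. Proof. by case: HT. Qed.
Lemma domZ a x : dom x -> dom (a *: x).
Proof. by case: HT => h0 [hL _] hx; have := hL a x 0 hx h0; rewrite addr0. Qed.
Lemma domD x y : dom x -> dom y -> dom (x + y).
Proof. by case: HT => h0 [hL _] hx hy; have := hL 1 x y hx hy; rewrite scale1r. Qed.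
Lemma T0 : T 0 = 0.
Proof.
case: HT => h0 [_ hT]; have := hT 1 0 0 h0 h0; rewrite !scale1r addr0 => h.
by have := congr1 (fun w => w - T 0) h; rewrite addrK subrr => <-.
Qed.
Lemma TZ a x : dom x -> T (a *: x) = a *: T x.
Proof.
case: HT => h0 [_ hT] hx; have := hT a x 0 hx h0.
by rewrite addr0 T0 addr0.
Qed.
Lemma TD x y : dom x -> dom y -> T (x + y) = T x + T y.
Proof. by case: HT => h0 [_ hT] hx hy; have := hT 1 x y hx hy; rewrite !scale1r. Qed.

Lemma nm_le1 (r : R) (q : R[i]) : 0 <= r -> r <= 1 -> nm (r%:C * q) <= nm q.
Proof.
move=> h0 h1; rewrite nmM nmR ger0_norm //.
by rewrite ler_piMl ?nm_ge0.
Qed.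


End Op.

Local Notation nm := (@Normc.normc _).
Ltac cplx := apply/eqP; rewrite eq_complex /=; apply/andP; split; apply/eqP;
  first [ring | nra | lra].

Lemma conv_P (R : realType) (V : lmodType R[i]) (S : inner_product_space V) (dom : V -> Prop)
  (T : V -> V) (HT : linear_operator dom T) (d : nat -> V) (lam mu : R[i]) (t : R) : W_e S dom T lam -> W_e S dom T mu -> 0 <= t -> t <= 1 ->
  P _ _ S dom T d (t%:C * lam + (1 - t)%:C * mu).
Proof.
have domZ' := @domZ _ _ _ _ HT. have domD' := @domD _ _ _ _ HT.
have TZ' := @TZ _ _ _ _ HT. have TD' := @TD _ _ _ _ HT.
move=> hl hm ht0 ht1.
have [eqlm|nelm] := eqVneq lam mu.
  have -> : t%:C * lam + (1 - t)%:C * mu = lam by rewrite -eqlm rmorphB rmorph1; ring.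
  exact: We_P.
move=> e0 he0 N.
set z := t%:C * lam + (1 - t)%:C * mu.
set e := Num.min e0 1.
have he : 0 < e by rewrite lt_min he0 ltr01.
have hee0 : e <= e0 by rewrite ge_min lexx.
have he1 : e <= 1 by rewrite ge_min lexx orbT.
set zn := nm z.
have zn0 : 0 <= zn by apply: nm_ge0.
set eps := e / (16 * (1 + zn)).
have hK : 0 < 16 * (1 + zn) by rewrite mulr_gt0 // ltr_pwDl.
have eps0 : 0 < eps by rewrite divr_gt0.
have epse : eps * (16 * (1 + zn)) = e by rewrite divfK // gt_eqF.
have eps16 : eps <= 1 / 16.
  rewrite /eps ler_pdivrMr //; clear - he1 zn0; lra.
case: hl => xs [hxd [hx1 [hxw hxc]]].
have [n [hxdj hxl]] : exists n, (forall j, (j < N)%N -> `|Defs.ip S (xs n) (d j)| < eps%:C) /\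
    `|Defs.ip S (T (xs n)) (xs n) - lam| < eps%:C.
  apply: ev_ex; apply: ev_and; last exact: hxc eps eps0.
  by apply: ev_all => j _; apply: ev_mono (hxw (d j) eps eps0) => k /=; rewrite subr0.
set x := xs n in hxdj hxl.
case: hm => ys [hyd [hy1 [hyw hyc]]].
have [m [[hydj hyl] [hyx hyTx]]] : exists m,
   ((forall j, (j < N)%N -> `|Defs.ip S (ys m) (d j)| < eps%:C) /\ `|Defs.ip S (T (ys m)) (ys m) - mu| < eps%:C) /\
   (`|Defs.ip S (ys m) x| < eps%:C /\ `|Defs.ip S (ys m) (T x)| < eps%:C).
  apply: ev_ex; apply: ev_and; apply: ev_and.
  - by apply: ev_all => j _; apply: ev_mono (hyw (d j) eps eps0) => k /=; rewrite subr0.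
  - exact: hyc eps eps0.
  - by apply: ev_mono (hyw x eps eps0) => k /=; rewrite subr0.
  - by apply: ev_mono (hyw (T x) eps eps0) => k /=; rewrite subr0.
set y := ys m in hydj hyl hyx hyTx.
set w := lam - mu.
have w0 : w != 0 by rewrite subr_eq0.
have nw0 : `|w| != 0 by rewrite normr_eq0.
set beta := Defs.ip S (T y) x.
pose rho := nm beta / nm w.
have rho0 : 0 <= rho by rewrite divr_ge0 ?nm_ge0.
have rhoC : rho%:C = `|beta| / `|w| by rewrite /rho fmorph_div.
pose om := if beta == 0 then 1 else - (w / `|w|) * (`|beta| / beta).
have omb : om * beta = - (rho%:C * w).
  rewrite rhoC /om; case: eqP => [->|/eqP bn0].
    by rewrite normr0 !mul0r mulr0 oppr0.
  by field; rewrite nw0 bn0.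
have om1 : om * conjc om = 1.
  rewrite /om; case: eqP => [_|/eqP bn0]; first by rewrite mul1r conjc1.
  have cw : conjc w = `|w| ^+ 2 / w by rewrite sqr_normc mulrAC divff // mul1r.
  have cb : conjc beta = `|beta| ^+ 2 / beta by rewrite sqr_normc mulrAC divff // mul1r.
  have nb0 : `|beta| != 0 by rewrite normr_eq0.
  have cnw : conjc `|w| = `|w| by apply: cjR.
  have cnb : conjc `|beta| = `|beta| by apply: cjR.
  rewrite cjM cjN !cjM !conjc_inv cw cb cnw cnb.
  by field; rewrite nw0 nb0 w0 bn0.
have nom : nm om = 1.
  have h : `|om| ^+ 2 = 1 by rewrite sqr_normc om1.
  have h2 : `|om| = 1.
    apply/eqP; rewrite -(eqrXn2 (n := 2)) //; first by rewrite h expr1n.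
  by case: h2.
have [a [b [a0 b0 ab1 abt]]] := @ab_exists _ rho t rho0 ht0 ht1.
have ab1C : a%:C * a%:C + b%:C * b%:C = 1.
  by clear - ab1; cplx.
have abtC : t%:C = a%:C * a%:C - rho%:C * a%:C * b%:C.
  by clear - abt; cplx.
have dx : dom x := hxd n.
have dy : dom y := hyd m.
have hxx : Defs.ip S x x = 1 := hx1 n.
have hyy : Defs.ip S y y = 1 := hy1 m.
set v := a%:C *: x + (b%:C * om) *: y.
have dv : dom v by apply: domD'; apply: domZ'.
have Tv : T v = a%:C *: T x + (b%:C * om) *: T y by rewrite /v TD' ?TZ' //; apply: domZ'.
set del := Defs.ip S y x.
set eta := Defs.ip S y (T x).
have Nv : Defs.ip S v v - 1 = (a * b)%:C * (conjc om * conjc del + om * del).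
  rewrite /v ip_exp2 hxx hyy (ip_conj S x y) -/del !cjM !cjR rmorphM.
  apply/eqP; rewrite -subr_eq0; apply/eqP.
  transitivity ((a%:C * a%:C + b%:C * b%:C - 1) + b%:C * b%:C * (om * conjc om - 1)); first by ring.
  by rewrite ab1C om1 !subrr mulr0 addr0.
have vge0 := ip_ge0 S v.
set r := complex.Re (Defs.ip S v v).
have hr : Defs.ip S v v = r%:C by rewrite /r RRe_real // ger0_real.
have nmK : nm (conjc om * conjc del + om * del) <= 2 * nm del.
  apply: le_trans (nmD _ _ _) _; rewrite !nmM !nmJ nom !mul1r; clear; lra.
have hdel : nm del < eps by rewrite -ltC.
have abh : a * b <= 1 / 2 by clear - ab1; have := sqr_ge0 (a - b); nra.
have ab0 : 0 <= a * b by rewrite mulr_ge0.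
have a1 : a <= 1 by clear - ab1 a0 b0; nra.
have b1 : b <= 1 by clear - ab1 a0 b0; nra.
have hr1 : `|r - 1| <= nm del.
  have e1 : Defs.ip S v v - 1 = (r - 1)%:C by rewrite hr rmorphB rmorph1.
  rewrite -nmR -e1 Nv nmM nmR ger0_norm //.
  have := nm_ge0 _ (conjc om * conjc del + om * del); clear - nmK abh ab0; nra.
have r0 : 1 / 2 <= r.
  have := ler_norm (1 - r); rewrite distrC; clear - hr1 hdel eps16; lra.
set c := (Num.sqrt r)^-1.
have sr : Num.sqrt r ^+ 2 = r by rewrite sqr_sqrtr //; clear - r0; lra.
have sr0 : 0 < Num.sqrt r by rewrite sqrtr_gt0; clear - r0; lra.
have c0 : 0 <= c by rewrite invr_ge0 ltW.
have r_ne0 : r != 0 by apply/eqP => h; rewrite h in r0; clear - r0; lra.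
have ccr : c * c * r = 1 by rewrite /c -expr2 exprVn sr mulVf.
have cc2 : c * c <= 2 by clear - ccr r0 c0; nra.
have c2 : c <= 2 by clear - cc2 c0; nra.
have e16 : 16 * eps <= e by rewrite -epse; have := mulr_ge0 (ltW eps0) zn0; clear - eps0 zn0; nra.
set u := c%:C *: v.
exists u; split; first by apply: domZ'.
split.
  rewrite /u ipZl ipZr cjR hr.
  have -> : c%:C * (c%:C * r%:C) = (c * (c * r))%:C by rewrite !rmorphM.
  by rewrite mulrA ccr.
split.
  move=> j hj; rewrite ltC /u ipZl /v ipDl !ipZl nmM nmR ger0_norm //.
  have h1 : nm (a%:C * Defs.ip S x (d j) + b%:C * om * Defs.ip S y (d j)) <= nm (Defs.ip S x (d j)) + nm (Defs.ip S y (d j)).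
    apply: le_trans (nmD _ _ _) _; apply: lerD; first exact: (nm_le1 _).
    rewrite -mulrA; apply: le_trans (nm_le1 _ _ _ b0 b1) _.
    by rewrite nmM nom mul1r.
  have := hxdj j hj; have := hydj j hj; rewrite !ltC => hy hx.
  have := nm_ge0 _ (a%:C * Defs.ip S x (d j) + b%:C * om * Defs.ip S y (d j)) => hn.
  have : c * nm (a%:C * Defs.ip S x (d j) + b%:C * om * Defs.ip S y (d j)) <=
         2 * nm (a%:C * Defs.ip S x (d j) + b%:C * om * Defs.ip S y (d j)) by rewrite ler_wpM2r.
  clear - h1 hy hx hn e16 hee0 c0 c2 eps0; lra.
have Tu : T u = c%:C *: T v by rewrite /u TZ'.
rewrite ltC Tu ipZl ipZr cjR Tv.
set Sx := (a * a)%:C * (Defs.ip S (T x) x - lam) + (a * b)%:C * (conjc om * conjc eta)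
          + (b * b)%:C * (Defs.ip S (T y) y - mu).
have ETv : Defs.ip S (a%:C *: T x + (b%:C * om) *: T y) v - z = Sx.
  have h1t : (1 - t)%:C = 1 - t%:C by cplx.
  have hM : forall p q : R, (p * q)%:C = p%:C * q%:C by move=> p q; cplx.
  rewrite /v ip_exp2 (ip_conj S (T x) y) -/eta -/beta !cjM !cjR /Sx /z h1t abtC (hM a a) (hM a b) (hM b b).
  apply/eqP; rewrite -subr_eq0; apply/eqP.
  transitivity (b%:C * b%:C * Defs.ip S (T y) y * (om * conjc om - 1) + a%:C * b%:C * (om * beta + rho%:C * w)
     + mu * (a%:C * a%:C + b%:C * b%:C - 1)); first by rewrite /w; ring.
  by rewrite om1 omb ab1C !subrr addNr !mulr0 !addr0.
set I := Defs.ip S (a%:C *: T x + (b%:C * om) *: T y) v in ETv *.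
have hI : I = Sx + z by rewrite -ETv subrK.
have key : c%:C * (c%:C * I) - z = (c * c)%:C * (Sx - z * (r - 1)%:C).
  apply/eqP; rewrite -subr_eq0; apply/eqP.
  have ccrC : c%:C * c%:C * r%:C = 1.
    have -> : c%:C * c%:C * r%:C = (c * c * r)%:C by cplx.
    by rewrite ccr.
  transitivity (z * (c%:C * c%:C * r%:C - 1)).
    have hM : forall p q : R, (p * q)%:C = p%:C * q%:C by move=> p q; cplx.
    have hB : (r - 1)%:C = r%:C - 1 by cplx.
    rewrite hI hM hB; ring.
  by rewrite ccrC subrr mulr0.
rewrite key nmM nmR ger0_norm ?mulr_ge0 //.
have hSx : nm Sx < 3 * eps.
  have := hxl; have := hyl; have := hyTx; rewrite !ltC => h3 h2 h1.
  have hab1 : a * b <= 1 by clear - abh; lra.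
  have haa : a * a <= 1 by clear - a0 a1; nra.
  have hbb : b * b <= 1 by clear - b0 b1; nra.
  apply: le_lt_trans (nmD _ _ _) _.
  have : nm ((b * b)%:C * (Defs.ip S (T y) y - mu)) <= nm (Defs.ip S (T y) y - mu).
    by apply: (nm_le1 _) => //; rewrite mulr_ge0.
  have : nm ((a * a)%:C * (Defs.ip S (T x) x - lam) + (a * b)%:C * (conjc om * conjc eta))
      <= nm (Defs.ip S (T x) x - lam) + nm eta.
    apply: le_trans (nmD _ _ _) _; apply: lerD; first by apply: (nm_le1 _) => //; rewrite mulr_ge0.
    apply: le_trans (nm_le1 _ _ _ ab0 hab1) _.
    by rewrite nmM nmJ nmJ nom mul1r.
  clear - h1 h2 h3; lra.
have hzr : nm (z * (r - 1)%:C) <= zn * eps.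
  rewrite nmM nmR -/zn; apply: ler_wpM2l => //; clear - hr1 hdel; lra.
have hX : nm (Sx - z * (r - 1)%:C) < 3 * eps + zn * eps.
  apply: le_lt_trans (nmD _ _ _) _; rewrite nmN; clear - hSx hzr; lra.
have hX0 := nm_ge0 _ (Sx - z * (r - 1)%:C).
have cc0 : 0 <= c * c by rewrite mulr_ge0.
have : c * c * nm (Sx - z * (r - 1)%:C) <= 2 * nm (Sx - z * (r - 1)%:C) by rewrite ler_wpM2r.
have : 2 * (3 * eps + zn * eps) <= e.
  rewrite -epse; have := mulr_ge0 (ltW eps0) zn0; clear - eps0 zn0; nra.
clear - hX hX0 cc2 hee0; lra.
Qed.


Lemma conv_ind (R : realType) (A : R[i] -> Prop) : convexC A -> forall n (t : 'I_n -> R) p,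
  (forall i, 0 <= t i) -> \sum_(i < n) t i = 1 -> (forall i, A (p i)) ->
  A (\sum_(i < n) (t i)%:C * p i).
Proof.
move=> hA; elim=> [|n IH] t p ht hs hp.
  by move: hs; rewrite big_ord0 => /eqP; rewrite eq_sym oner_eq0.
rewrite big_ord_recr /=; rewrite big_ord_recr /= in hs.
set s := \sum_(i < n) t (widen_ord (leqnSn n) i) in hs.
have s0 : 0 <= s by apply: sumr_ge0 => i _.
have tl0 := ht ord_max.
have [s_eq0|s_ne0] := eqVneq s 0.
  have hz : forall i : 'I_n, t (widen_ord (leqnSn n) i) = 0.
    by move=> i; move/eqP: s_eq0; rewrite psumr_eq0 // => /allP /(_ i) /=; rewrite mem_index_enum => /(_ isT) /eqP.
  rewrite big1 ?add0r; last by move=> i _; rewrite hz mul0r.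
  have -> : t ord_max = 1 by rewrite -hs s_eq0 add0r.
  by rewrite mul1r.
set t' := fun i : 'I_n => t (widen_ord (leqnSn n) i) / s.
have hz' := IH t' (fun i => p (widen_ord (leqnSn n) i)).
have hA' : A (\sum_(i < n) (t' i)%:C * p (widen_ord (leqnSn n) i)).
  apply: hz' => //.
    by move=> i; rewrite /t' divr_ge0.
  by rewrite /t' -mulr_suml -/s divff.
have s1 : s <= 1 by lra.
have := hA _ _ s hA' (hp ord_max) s0 s1.
have -> : 1 - s = t ord_max by lra.
rewrite mulr_sumr.
congr (A (_ + _)); apply: eq_bigr => i _.
by rewrite mulrA -rmorphM /t' mulrCA divff // mulr1.
Qed.

Theorem proposition2p2 (R : realType) (V : lmodType R[i])
    (S : inner_product_space V) (HS : is_hilbert_space S)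
    (dom : V -> Prop) (T : V -> V) (HT : linear_operator dom T) :
  closedC (W_e S dom T) /\ convexC (W_e S dom T) /\
  (forall z : R[i], convC (sigma_e S dom T) z -> W_e S dom T z).
Proof.
have [_ [[dn hdn] _]] := HS.
have hconv : convexC (W_e S dom T).
  move=> z w t hz hw ht0 ht1; apply: (@P_We _ _ S dom T dn hdn).
  exact: (@conv_P _ _ S dom T HT dn z w t hz hw ht0 ht1).
split; first exact: (@We_closed _ _ S dom T dn hdn).
split; first exact: hconv.
move=> z [n [t [p [ht [hs [hp ->]]]]]].
apply: (@conv_ind _ _ hconv n t p ht hs) => i.
by apply: sigma_We; exact: hp.
Qed.
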